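(* Let $g(t)$, $t\in[0,T)$, be the maximal Ricci flow solution on $S^1\times S^3$ of the form $g(t)=\phi^2dz^2+a^2\omega^1\otimes\omega^1+b^2\omega^2\otimes\omega^2+c^2\omega^3\otimes\omega^3$ starting from initial data with $0<a\le b\le c$, and let $\hat c(t)=\max_s c(s,t)$. Then $\hat c(t)^2\le -4t+\hat c(0)^2$.
   Context: $S^3=SU(2)$ carries a global left-invariant frame $E_1,E_2,E_3$ with $[E_i,E_j]=-2\epsilon_{ijk}E_k$ and dual coframe $\omega^i$; $z\in S^1=[0,2\pi)$, $\phi,a,b,c$ positive smooth $2\pi$-periodic functions; $s$ is the arclength coordinate $ds=\phi\,dz$. The Ricci flow $\partial_tg=-2\mathrm{Ric}(g)$ preserves this form. *)

(* Defs.v *)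
From Stdlib Require Import Reals.
From Coquelicot Require Import Coquelicot.
Open Scope R_scope.

(* A function f : R -> R -> R is read as f z t, with z the (lifted) circle
   coordinate and t the time. *)

Definition dz (f : R -> R -> R) (z t : R) : R := Derive (fun y => f y t) z.
Definition dt (f : R -> R -> R) (z t : R) : R := Derive (fun s => f z s) t.

(* arclength derivatives: ds = phi dz, so d/ds = (1/phi) d/dz *)
Definition ds (phi f : R -> R -> R) (z t : R) : R := dz f z t / phi z t.
Definition dss (phi f : R -> R -> R) (z t : R) : R :=
  dz (ds phi f) z t / phi z t.

Definition jcont0 (g : R -> R -> R) (T : R) : Prop :=
  forall z t, 0 <= t < T -> forall eps, 0 < eps -> exists del, 0 < del /\
    forall z' t', 0 <= t' < T -> Rabs (z' - z) < del -> Rabs (t' - t) < del ->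
      Rabs (g z' t' - g z t) < eps.

Definition jcontpos (g : R -> R -> R) (T : R) : Prop :=
  forall z t, 0 < t < T -> forall eps, 0 < eps -> exists del, 0 < del /\
    forall z' t', 0 < t' < T -> Rabs (z' - z) < del -> Rabs (t' - t) < del ->
      Rabs (g z' t' - g z t) < eps.

Definition regular (f : R -> R -> R) (T : R) : Prop :=
  (forall z t, 0 <= t < T -> ex_derive (fun y => f y t) z) /\
  (forall z t, 0 <= t < T -> ex_derive (fun y => dz f y t) z) /\
  (forall z t, 0 < t < T -> ex_derive (fun s => f z s) t) /\
  jcont0 f T /\ jcont0 (dz f) T /\ jcont0 (dz (dz f)) T /\
  jcontpos (dt f) T /\
  (forall z t, 0 <= t < T -> f (z + 2 * PI) t = f z t) /\
  (forall z t, 0 <= t < T -> 0 < f z t).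

(* Ricci flow of g = phi^2 dz^2 + a^2 w1^2 + b^2 w2^2 + c^2 w3^2 on S^1 x S^3,
   with [E_i,E_j] = -2 eps_ijk E_k, written out as the equivalent PDE system
   d/dt g = -2 Ric(g) for the warping functions (s = arclength, ds = phi dz). *)
Definition ricci_flow_S1S3 (phi a b c : R -> R -> R) (T : R) : Prop :=
  regular phi T /\ regular a T /\ regular b T /\ regular c T /\
  forall z t, 0 < t < T ->
    dt phi z t = phi z t * (dss phi a z t / a z t + dss phi b z t / b z t
                             + dss phi c z t / c z t) /\
    dt a z t = dss phi a z t
               + ds phi a z t * (ds phi b z t / b z t + ds phi c z t / c z t)
               + 2 * ((b z t ^ 2 - c z t ^ 2) ^ 2 - a z t ^ 4)
                   / (a z t * b z t ^ 2 * c z t ^ 2) /\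
    dt b z t = dss phi b z t
               + ds phi b z t * (ds phi a z t / a z t + ds phi c z t / c z t)
               + 2 * ((a z t ^ 2 - c z t ^ 2) ^ 2 - b z t ^ 4)
                   / (a z t ^ 2 * b z t * c z t ^ 2) /\
    dt c z t = dss phi c z t
               + ds phi c z t * (ds phi a z t / a z t + ds phi b z t / b z t)
               + 2 * ((a z t ^ 2 - b z t ^ 2) ^ 2 - c z t ^ 4)
                   / (a z t ^ 2 * b z t ^ 2 * c z t).

(* hat c(t) = max over the circle of c(., t) (a sup, attained by continuity
   and periodicity) *)
Definition chat (c : R -> R -> R) (t : R) : R :=
  real (Lub_Rbar (fun x => exists z, x = c z t)).

(* Main.v *)
Require Import Defs.
From Stdlib Require Import Reals.
From Coquelicot Require Import Coquelicot.
From Stdlib Require Import Lra Psatz Classical ClassicalEpsilon ZArith.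
Open Scope R_scope.


Lemma alg (x y p : R) : 0 < x -> 0 < y -> 0 < p -> x^2 <= p^2 -> y^2 <= p^2 ->
  2 * p * (2 * ((x^2 - y^2)^2 - p^4) / (x^2 * y^2 * p)) <= -4.
Proof.
  intros hx hy hp h1 h2.
  assert (hd : 0 < x^2 * y^2) by (apply Rmult_lt_0_compat; apply pow_lt; lra).
  replace (2 * p * (2 * ((x^2 - y^2)^2 - p^4) / (x^2 * y^2 * p)))
    with (4 * ((x^2 - y^2)^2 - p^4) / (x^2 * y^2)) by (field; lra).
  unfold Rdiv. apply (Rmult_le_reg_r (x^2*y^2)); [lra|].
  rewrite Rmult_assoc, Rinv_l by lra.
  set (X := x^2) in *. set (Y := y^2) in *. set (P := p^2) in *.
  replace (p^4) with (P*P) by (unfold P; ring).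
  assert (0 < X) by (unfold X; apply pow_lt; lra).
  assert (0 < Y) by (unfold Y; apply pow_lt; lra).
  destruct (Rle_lt_dec X Y); nra.
Qed.

Lemma left_step (F : R -> R) r l : is_derive F r l -> l < 0 ->
  exists eta, 0 < eta /\ forall s, r - eta < s < r -> F r < F s.
Proof.
  intros hd hl. apply is_derive_Reals in hd.
  destruct (hd (-l/2)) as [del hdel]; [lra|].
  exists del. split; [apply cond_pos|]. intros s hs.
  assert (hh : s - r <> 0) by lra.
  assert (ha : Rabs (s - r) < del) by (rewrite Rabs_left; lra).
  specialize (hdel (s - r) hh ha).
  replace (r + (s - r)) with s in hdel by ring.
  apply Rabs_def2 in hdel. destruct hdel as [h1 h2].
  assert (hq : (F s - F r) / (s - r) < 0) by lra.
  assert (hneg : s - r < 0) by lra.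
  destruct (Rle_lt_dec (F s) (F r)); [|lra].
  exfalso. assert (0 <= (F s - F r) / (s - r)).
  { unfold Rdiv. replace ((F s - F r) * / (s - r)) with ((F r - F s) * / (r - s)).
    - apply Rmult_le_pos; [lra|]. left; apply Rinv_0_lt_compat; lra.
    - field; lra. }
  lra.
Qed.

Lemma per_Z (g : R -> R) : (forall z, g (z + 2*PI) = g z) ->
  forall n : Z, forall x, g (x + 2*PI*IZR n) = g x.
Proof.
  intros hp n. induction n using Z.peano_ind; intros x.
  - f_equal; simpl; ring.
  - rewrite <- Z.add_1_r, plus_IZR.
    replace (x + 2*PI*(IZR n + 1)) with ((x + 2*PI*IZR n) + 2*PI) by (simpl; ring).
    rewrite hp; auto.
  - rewrite <- Z.sub_1_r, minus_IZR.
    replace (x + 2 * PI * (IZR n - IZR 1)) with ((x - 2*PI) + 2*PI*IZR n) by (simpl; ring).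
    rewrite IHn. rewrite <- (hp (x - 2*PI)). f_equal; ring.
Qed.

Lemma per_red (g : R -> R) : (forall z, g (z + 2*PI) = g z) ->
  forall z, exists z', 0 <= z' <= 2*PI /\ g z = g z'.
Proof.
  intros hp z. pose proof PI_RGT_0 as hpi.
  destruct (base_Int_part (z / (2*PI))) as [h1 h2].
  set (n := Int_part (z / (2*PI))) in *.
  exists (z + 2*PI*IZR (- n)). split.
  - rewrite opp_IZR.
    assert (IZR n * (2*PI) <= z /\ z - 2*PI < IZR n * (2*PI)).
    { split.
      - apply (Rmult_le_compat_r (2*PI)) in h1; [|lra].
        unfold Rdiv in h1. rewrite Rmult_assoc, Rinv_l in h1; lra.
      - assert (z / (2*PI) - 1 < IZR n) by lra.
        apply (Rmult_lt_compat_r (2*PI)) in H; [|lra].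
        unfold Rdiv in H. rewrite Rmult_minus_distr_r, Rmult_assoc, Rinv_l in H; lra. }
    nra.
  - rewrite per_Z; auto.
Qed.

Lemma gmax (g : R -> R) : (forall z, g (z + 2*PI) = g z) ->
  (forall z, continuity_pt g z) -> exists zm, forall z, g z <= g zm.
Proof.
  intros hp hc. pose proof PI_RGT_0.
  destruct (continuity_ab_maj g 0 (2*PI)) as [zm [h1 h2]]; [lra| intros; apply hc|].
  exists zm. intros z. destruct (per_red g hp z) as [z' [hz' ->]]. auto.
Qed.

Lemma lub_max (g : R -> R) zm : (forall z, g z <= g zm) ->
  real (Lub_Rbar (fun x => exists z, x = g z)) = g zm.
Proof.
  intros h. rewrite (is_lub_Rbar_unique _ (Finite (g zm))); [reflexivity|].
  split.
  - intros x [z ->]. simpl. auto.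
  - intros b hb. apply hb. exists zm. reflexivity.
Qed.

Lemma lub_le (g : R -> R) B : (forall z, g z <= B) -> 0 < g 0 ->
  0 <= real (Lub_Rbar (fun x => exists z, x = g z)) <= B.
Proof.
  intros h h0. destruct (Lub_Rbar_correct (fun x => exists z, x = g z)) as [hu hl].
  assert (hb : Rbar_le (Lub_Rbar (fun x => exists z, x = g z)) B).
  { apply hl. intros x [z ->]. simpl; auto. }
  assert (hg : Rbar_le (g 0) (Lub_Rbar (fun x => exists z, x = g z))).
  { apply hu. exists 0. reflexivity. }
  destruct (Lub_Rbar (fun x => exists z, x = g z)); simpl in *; try contradiction; lra.
Qed.

Lemma deriv0_max (g : R -> R) z : (forall y, ex_derive g y) -> (forall y, g y <= g z) ->
  Derive g z = 0.
Proof.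
  intros hd hm.
  assert (pr : derivable_pt g z).
  { exists (Derive g z). apply is_derive_Reals, Derive_correct, hd. }
  rewrite <- (Derive_Reals g z pr).
  apply (deriv_maximum g (z-1) (z+1)); try lra. intros; apply hm.
Qed.

Lemma second_max (g : R -> R) z : (forall y, ex_derive g y) ->
  ex_derive (Derive g) z -> (forall y, g y <= g z) -> Derive (Derive g) z <= 0.
Proof.
  intros hd hd2 hm. pose proof (deriv0_max g z hd hm) as h0.
  destruct (Rle_lt_dec (Derive (Derive g) z) 0) as [|hL]; [auto|exfalso].
  set (L := Derive (Derive g) z) in *.
  assert (hl : derivable_pt_lim (Derive g) z L).
  { apply is_derive_Reals, Derive_correct, hd2. }
  destruct (hl (L/2)) as [del hdel]; [lra|].
  assert (hpos : forall k, 0 < k < del -> 0 < Derive g (z + k)).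
  { intros k hk. assert (k <> 0) by lra.
    assert (Rabs k < del) by (rewrite Rabs_right; lra).
    specialize (hdel k H H0). rewrite h0 in hdel. apply Rabs_def2 in hdel.
    destruct hdel as [h1 h2].
    assert (0 < (Derive g (z + k) - 0) / k) by lra.
    unfold Rdiv in H1. rewrite Rminus_0_r in H1.
    apply (Rmult_lt_compat_r k) in H1; [|lra].
    rewrite Rmult_assoc, Rinv_l in H1; lra. }
  pose proof (cond_pos del) as hdp.
  set (k0 := del / 2).
  assert (hcont : forall y, continuity_pt g y).
  { intros y. apply continuity_pt_filterlim. apply (ex_derive_continuous (K:=R_AbsRing) (V:=R_NormedModule)). apply hd. }
  assert (hder : forall y, is_derive g y (Derive g y)).
  { intros y. apply Derive_correct, hd. }
  destruct (MVT_gen g z (z + k0/2) (Derive g) (fun x _ => hder x) (fun x _ => hcont x))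
    as [x1 [hx1 e1]].
  destruct (MVT_gen g (z + k0/2) (z + k0) (Derive g) (fun x _ => hder x) (fun x _ => hcont x))
    as [x2 [hx2 e2]].
  rewrite Rmin_left in hx1, hx2 by (unfold k0; lra).
  rewrite Rmax_right in hx1, hx2 by (unfold k0; lra).
  assert (0 <= Derive g x1).
  { destruct (Req_dec x1 z) as [->|]; [lra|].
    left. replace x1 with (z + (x1 - z)) by ring. apply hpos. unfold k0 in *; lra. }
  assert (0 < Derive g x2).
  { replace x2 with (z + (x2 - z)) by ring. apply hpos. unfold k0 in *; lra. }
  assert (k0 > 0) by (unfold k0; lra).
  specialize (hm (z + k0)). nra.
Qed.

Lemma spatial (phi f : R -> R -> R) T z t : regular phi T -> regular f T -> 0 <= t < T ->
  (forall y, f y t <= f z t) -> ds phi f z t = 0 /\ dss phi f z t <= 0.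
Proof.
  intros [p1 [p2 [p3 [p4 [p5 [p6 [p7 [p8 p9]]]]]]]] [f1 [f2 [f3 [f4 [f5 [f6 [f7 [f8 f9]]]]]]]] ht hm.
  assert (h0 : dz f z t = 0).
  { unfold dz. apply deriv0_max; auto. }
  split.
  - unfold ds. rewrite h0. unfold Rdiv; ring.
  - unfold dss, dz at 1, ds.
    assert (hp : 0 < phi z t) by auto.
    rewrite (Derive_div (fun y => dz f y t) (fun y => phi y t)); auto.
    + rewrite h0.
      assert (Derive (fun y => dz f y t) z <= 0).
      { unfold dz at 1. apply second_max; [intros; apply f1; auto | apply (f2 z t ht) | auto]. }
      unfold Rdiv.
      apply Rmult_le_0_r; [|left; apply Rinv_0_lt_compat; auto].
      apply Rmult_le_0_r; [|left; apply Rinv_0_lt_compat; apply pow_lt; auto].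
      nra.
    + lra.
Qed.

Lemma sq_bound (x y e : R) : Rabs (x - y) < e -> e <= 1 ->
  Rabs (x^2 - y^2) < e * (2 * Rabs y + 1).
Proof.
  intros h he.
  replace (x^2 - y^2) with ((x - y) * ((x - y) + 2 * y)) by ring.
  rewrite Rabs_mult.
  pose proof (Rabs_triang (x - y) (2*y)) as ht.
  rewrite Rabs_mult, (Rabs_right 2) in ht by lra.
  pose proof (Rabs_pos (x-y)). pose proof (Rabs_pos ((x - y) + 2*y)). pose proof (Rabs_pos y).
  nra.
Qed.

Lemma jc_sql f T k : jcont0 f T -> jcont0 (fun z s => f z s ^ 2 + k * s) T.
Proof.
  intros hf z t ht eps he.
  set (e1 := Rmin 1 (eps / 2 / (2 * Rabs (f z t) + 1))).
  assert (hA : 0 < 2 * Rabs (f z t) + 1) by (pose proof (Rabs_pos (f z t)); lra).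
  assert (he1 : 0 < e1).
  { unfold e1. apply Rmin_glb_lt; [lra|]. apply Rdiv_lt_0_compat; lra. }
  destruct (hf z t ht e1 he1) as [d1 [hd1 H1]].
  set (d := Rmin d1 (eps / 2 / (Rabs k + 1))).
  assert (hB : 0 < Rabs k + 1) by (pose proof (Rabs_pos k); lra).
  exists d. split.
  { unfold d. apply Rmin_glb_lt; [lra|]. apply Rdiv_lt_0_compat; lra. }
  intros z' t' ht' hz hdt.
  assert (hd1' : d <= d1) by apply Rmin_l.
  assert (hd2' : d <= eps / 2 / (Rabs k + 1)) by apply Rmin_r.
  specialize (H1 z' t' ht' ltac:(lra) ltac:(lra)).
  pose proof (sq_bound _ _ _ H1 (Rmin_l _ _)) as hs.
  assert (hs2 : e1 * (2 * Rabs (f z t) + 1) <= eps / 2).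
  { assert (e1 <= eps / 2 / (2 * Rabs (f z t) + 1)) by apply Rmin_r.
    apply (Rmult_le_compat_r (2 * Rabs (f z t) + 1)) in H; [|lra].
    replace (eps / 2 / (2 * Rabs (f z t) + 1) * (2 * Rabs (f z t) + 1)) with (eps/2) in H by (field; lra). lra. }
  assert (hk : Rabs (k * t' - k * t) <= eps / 2).
  { rewrite <- Rmult_minus_distr_l, Rabs_mult.
    apply Rle_trans with ((Rabs k + 1) * (eps / 2 / (Rabs k + 1))).
    - apply Rmult_le_compat; try apply Rabs_pos; lra.
    - right. field. lra. }
  replace (f z' t' ^ 2 + k * t' - (f z t ^ 2 + k * t)) with
    ((f z' t' ^ 2 - f z t ^ 2) + (k * t' - k * t)) by ring.
  eapply Rle_lt_trans; [apply Rabs_triang|]. lra.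
Qed.

Lemma usc (g : R -> R -> R) T r m eps : jcont0 g T -> 0 <= r < T -> 0 < eps ->
  (forall z, 0 <= z <= 2*PI -> g z r <= m) ->
  exists d, 0 < d /\ forall z s, 0 <= z <= 2*PI -> 0 <= s < T -> Rabs (s - r) < d ->
    g z s < m + eps.
Proof.
  intros hg hr he hm.
  assert (hex : forall z, {del : posreal | forall z' t', 0 <= t' < T -> Rabs (z' - z) < del ->
      Rabs (t' - r) < del -> Rabs (g z' t' - g z r) < eps}).
  { intros z. apply constructive_indefinite_description.
    destruct (hg z r hr eps he) as [del [hdel H]].
    exists (mkposreal del hdel). exact H. }
  set (delta := fun z => proj1_sig (hex z)).
  destruct (compactness_value_1d 0 (2*PI) delta) as [d hd].
  exists d. split; [apply cond_pos|].
  intros z s hz hs hsr.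
  apply NNPP. intros hn. apply (hd z hz). intros [t0 [ht0 [hzt hdt]]].
  apply hn.
  pose proof (proj2_sig (hex t0) z s hs hzt ltac:(unfold delta in hdt; lra)) as H.
  apply Rabs_def2 in H. specialize (hm t0 ht0). lra.
Qed.

Lemma reg_red f T t : regular f T -> 0 <= t < T ->
  forall z, exists z', 0 <= z' <= 2*PI /\ f z t = f z' t.
Proof.
  intros [f1 [f2 [f3 [f4 [f5 [f6 [f7 [f8 f9]]]]]]]] ht.
  apply (per_red (fun z => f z t)). intros; apply f8; auto.
Qed.

Lemma reg_max f T t : regular f T -> 0 <= t < T -> exists zm, forall z, f z t <= f zm t.
Proof.
  intros hr ht. pose proof hr as [f1 [f2 [f3 [f4 [f5 [f6 [f7 [f8 f9]]]]]]]].
  apply (gmax (fun z => f z t)).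
  - intros; apply f8; auto.
  - intros y. apply continuity_pt_filterlim.
    apply (ex_derive_continuous (K:=R_AbsRing) (V:=R_NormedModule) (fun z => f z t)). apply f1; auto.
Qed.

Lemma reg_pos f T z t : regular f T -> 0 <= t < T -> 0 < f z t.
Proof. intros [f1 [f2 [f3 [f4 [f5 [f6 [f7 [f8 f9]]]]]]]] ht. auto. Qed.

Lemma reg_jc f T : regular f T -> jcont0 f T.
Proof. intros [f1 [f2 [f3 [f4 [f5 [f6 [f7 [f8 f9]]]]]]]]. auto. Qed.

Lemma usc_f f T r k v : regular f T -> 0 <= r < T -> (forall z, f z r ^ 2 + k * r < v) ->
  exists d, 0 < d /\ forall z s, 0 <= s < T -> Rabs (s - r) < d -> f z s ^ 2 + k * s < v.
Proof.
  intros hf hr hv. destruct (reg_max f T r hf hr) as [zf hzf].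
  set (m := f zf r ^ 2 + k * r).
  assert (hm : m < v) by apply hv.
  destruct (usc (fun z s => f z s ^ 2 + k * s) T r m (v - m) (jc_sql f T k (reg_jc f T hf)) hr
    ltac:(lra)) as [d [hd H]].
  { intros z hz. unfold m. pose proof (hzf z). pose proof (reg_pos f T z r hf hr). nra. }
  exists d. split; auto. intros z s hs hsr.
  destruct (reg_red f T s hf hs z) as [z' [hz' ->]].
  specialize (H z' s hz' hs hsr). simpl in H. lra.
Qed.

Lemma decay_pt phi f T Q Rr z t : regular phi T -> regular f T -> 0 < t < T ->
  (forall y, f y t <= f z t) ->
  dt f z t = dss phi f z t + ds phi f z t * Q + Rr ->
  2 * f z t * dt f z t <= 2 * f z t * Rr.
Proof.
  intros hp hf ht hm he.
  destruct (spatial phi f T z t hp hf ltac:(lra) hm) as [h1 h2].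
  rewrite he, h1. pose proof (reg_pos f T z t hf ltac:(lra)). nra.
Qed.

Lemma step3 f T r zm k v : regular f T -> 0 < r < T ->
  2 * f zm r * dt f zm r + k < 0 -> v <= f zm r ^ 2 + k * r ->
  exists s, 0 <= s < r /\ v < f zm s ^ 2 + k * s.
Proof.
  intros hf hr hl hv.
  pose proof hf as [f1 [f2 [f3 [f4 [f5 [f6 [f7 [f8 f9]]]]]]]].
  assert (hd : is_derive (fun s => f zm s ^ 2 + k * s) r (2 * f zm r * dt f zm r + k)).
  { assert (hd1 : is_derive (fun s => f zm s) r (dt f zm r)).
    { apply Derive_correct. apply f3; auto. }
    eapply is_derive_ext_loc; [apply filter_forall; intros; reflexivity|].
    replace (2 * f zm r * dt f zm r + k) with (INR 2 * dt f zm r * f zm r ^ Init.Nat.pred 2 + k * 1)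
      by (simpl; ring).
    apply (is_derive_plus (fun s => f zm s ^ 2) (fun s => k * s)).
    - apply is_derive_pow. exact hd1.
    - auto_derive; [exact I | ring]. }
  destruct (left_step _ r _ hd hl) as [eta [heta H]].
  exists (Rmax (r - eta/2) (r/2)).
  assert (r - eta < Rmax (r - eta / 2) (r / 2) < r).
  { split; [apply Rlt_le_trans with (r - eta/2); [lra|apply Rmax_l]|].
    apply Rmax_lub_lt; lra. }
  split.
  - split; [apply Rle_trans with (r/2); [lra|apply Rmax_r]|lra].
  - specialize (H _ H0). simpl in H. lra.
Qed.

Theorem lemma4p3 (phi a b c : R -> R -> R) (T : R) :
  0 < T ->
  ricci_flow_S1S3 phi a b c T ->
  (forall z, a z 0 <= b z 0 /\ b z 0 <= c z 0) ->
  forall t, 0 <= t < T -> chat c t ^ 2 <= -4 * t + chat c 0 ^ 2.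
Proof.
  intros HT RF Hord t Ht.
  destruct RF as [Rphi [Ra [Rb [Rc Heq]]]].
  assert (H0T : 0 <= 0 < T) by lra.
  destruct (reg_max c T 0 Rc H0T) as [z0 hz0].
  unfold chat. rewrite (lub_max (fun z => c z 0) z0 hz0).
  set (M := c z0 0 ^ 2).
  set (K := fun z s => Rmax (a z s ^ 2) (Rmax (b z s ^ 2) (c z s ^ 2))).
  assert (HK0 : forall z, K z 0 <= M).
  { intros z. unfold K, M. destruct (Hord z).
    pose proof (reg_pos a T z 0 Ra H0T). pose proof (reg_pos b T z 0 Rb H0T).
    pose proof (reg_pos c T z 0 Rc H0T). pose proof (hz0 z).
    apply Rmax_lub; [|apply Rmax_lub]; nra. }
  assert (Ka : forall z s, a z s ^ 2 <= K z s) by (intros; apply Rmax_l).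
  assert (Kb : forall z s, b z s ^ 2 <= K z s)
    by (intros; eapply Rle_trans; [apply Rmax_l | apply Rmax_r]).
  assert (Kc : forall z s, c z s ^ 2 <= K z s)
    by (intros; eapply Rle_trans; [apply Rmax_r | apply Rmax_r]).
  assert (Claim : forall del, 0 < del -> forall s z, 0 <= s < T -> K z s + (4 - del) * s <= M).
  { intros del hdel.
    destruct (classic (exists s1 z1, 0 <= s1 < T /\ K z1 s1 + (4 - del) * s1 > M))
      as [[s1 [z1 [hs1 hv]]] | hn];
      [| intros s z hs; apply Rnot_lt_le; intro; apply hn; exists s, z; split; auto; lra].
    exfalso.
    set (v := K z1 s1 + (4 - del) * s1) in *.
    set (E := fun s => 0 <= s <= s1 /\ exists z, v <= K z s + (4 - del) * s).
    assert (hE1 : E s1) by (split; [lra | exists z1; unfold v; lra]).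
    pose proof (Glb_Rbar_correct E) as [hlb hgr].
    set (gg := Glb_Rbar E) in *. clearbody gg.
    assert (h0lb : is_lb_Rbar E (Finite 0)) by (intros x [hx _]; simpl; lra).
    destruct gg as [r | |].
    2: { specialize (hlb s1 hE1). simpl in hlb. contradiction. }
    2: { specialize (hgr _ h0lb). simpl in hgr. contradiction. }
    assert (hr0 : 0 <= r) by (specialize (hgr _ h0lb); simpl in hgr; lra).
    assert (hr1 : r <= s1) by (specialize (hlb s1 hE1); simpl in hlb; lra).
    assert (hrT : 0 <= r < T) by lra.
    assert (hEr : exists z, v <= K z r + (4 - del) * r).
    { apply NNPP. intros hno.
      assert (hno' : forall z, K z r + (4 - del) * r < v).
      { intros z. apply Rnot_le_lt. intro. apply hno. exists z. auto. }
      destruct (usc_f a T r (4 - del) v Ra hrT) as [da [hda Ha]].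
      { intros z. specialize (hno' z). specialize (Ka z r). lra. }
      destruct (usc_f b T r (4 - del) v Rb hrT) as [db [hdb Hb]].
      { intros z. specialize (hno' z). specialize (Kb z r). lra. }
      destruct (usc_f c T r (4 - del) v Rc hrT) as [dc [hdc Hc]].
      { intros z. specialize (hno' z). specialize (Kc z r). lra. }
      set (d := Rmin da (Rmin db dc)).
      assert (hd : 0 < d) by (unfold d; repeat apply Rmin_glb_lt; auto).
      assert (hd1 : d <= da) by apply Rmin_l.
      assert (hd2 : d <= db) by (eapply Rle_trans; [apply Rmin_r| apply Rmin_l]).
      assert (hd3 : d <= dc) by (eapply Rle_trans; [apply Rmin_r| apply Rmin_r]).
      destruct (classic (exists e, E e /\ e < r + d)) as [[e [hEe hed]] | hne].
      - assert (her : r <= e) by (specialize (hlb e hEe); simpl in hlb; lra).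
        destruct hEe as [he [z hz]].
        assert (hes : 0 <= e < T) by lra.
        assert (habs : Rabs (e - r) < d) by (rewrite Rabs_right; lra).
        specialize (Ha z e hes ltac:(lra)). specialize (Hb z e hes ltac:(lra)).
        specialize (Hc z e hes ltac:(lra)).
        assert (K z e + (4 - del) * e < v).
        { unfold K. apply Rmax_case; [lra|]. apply Rmax_case; lra. }
        lra.
      - assert (hlbd : is_lb_Rbar E (Finite (r + d))).
        { intros x hx. simpl. apply Rnot_lt_le. intro. apply hne. exists x; auto. }
        specialize (hgr _ hlbd). simpl in hgr. lra. }
    assert (hrpos : 0 < r).
    { destruct hr0 as [|hr0]; auto. subst r. destruct hEr as [z hz].
      specialize (HK0 z). lra. }
    assert (hrT' : 0 < r < T) by lra.
    destruct hEr as [z1' hz1'].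
    destruct (reg_max a T r Ra hrT) as [za hza].
    destruct (reg_max b T r Rb hrT) as [zb hzb].
    destruct (reg_max c T r Rc hrT) as [zc hzc].
    set (A := a za r ^ 2). set (B := b zb r ^ 2). set (C := c zc r ^ 2).
    assert (hA : forall z, a z r ^ 2 <= A).
    { intros z. pose proof (hza z). pose proof (reg_pos a T z r Ra hrT). unfold A; nra. }
    assert (hB : forall z, b z r ^ 2 <= B).
    { intros z. pose proof (hzb z). pose proof (reg_pos b T z r Rb hrT). unfold B; nra. }
    assert (hC : forall z, c z r ^ 2 <= C).
    { intros z. pose proof (hzc z). pose proof (reg_pos c T z r Rc hrT). unfold C; nra. }
    assert (hKz : K z1' r <= Rmax A (Rmax B C)).
    { unfold K. apply Rmax_lub; [|apply Rmax_lub].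
      - eapply Rle_trans; [apply hA|apply Rmax_l].
      - eapply Rle_trans; [apply hB|]. eapply Rle_trans; [apply Rmax_l|apply Rmax_r].
      - eapply Rle_trans; [apply hC|]. eapply Rle_trans; [apply Rmax_r|apply Rmax_r]. }
    assert (fin : forall f zm s, 0 <= s < r -> v < f zm s ^ 2 + (4 - del) * s ->
                  f zm s ^ 2 <= K zm s -> False).
    { intros f zm s hs hlt hK.
      assert (hEs : E s) by (split; [lra | exists zm; lra]).
      specialize (hlb s hEs). simpl in hlb. lra. }
    assert (hpa : forall z, 0 < a z r) by (intros; apply (reg_pos a T z r Ra hrT)).
    assert (hpb : forall z, 0 < b z r) by (intros; apply (reg_pos b T z r Rb hrT)).
    assert (hpc : forall z, 0 < c z r) by (intros; apply (reg_pos c T z r Rc hrT)).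
    destruct (Rle_lt_dec B A) as [hBA | hAB]; [destruct (Rle_lt_dec C A) as [hCA | hAC] |
       destruct (Rle_lt_dec C B) as [hCB | hBC]].
    +
      destruct (Heq za r hrT') as [_ [ea _]].
      pose proof (decay_pt phi a T _ _ za r Rphi Ra hrT' hza ea) as hdec.
      assert (halg := alg (b za r) (c za r) (a za r) (hpb za) (hpc za) (hpa za)
                       ltac:(specialize (hB za); fold A; lra) ltac:(specialize (hC za); fold A; lra)).
      replace (a za r * b za r ^ 2 * c za r ^ 2) with (b za r ^ 2 * c za r ^ 2 * a za r) in hdec by ring.
      destruct (step3 a T r za (4 - del) v Ra hrT' ltac:(lra)) as [s [hs hlt]].
      { assert (Rmax A (Rmax B C) = A) by (rewrite Rmax_left; [reflexivity|apply Rmax_lub; lra]).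
        fold A. lra. }
      exact (fin a za s hs hlt (Ka za s)).
    +
      destruct (Heq zc r hrT') as [_ [_ [_ ec]]].
      pose proof (decay_pt phi c T _ _ zc r Rphi Rc hrT' hzc ec) as hdec.
      assert (halg := alg (a zc r) (b zc r) (c zc r) (hpa zc) (hpb zc) (hpc zc)
                       ltac:(specialize (hA zc); fold C; lra) ltac:(specialize (hB zc); fold C; lra)).
      destruct (step3 c T r zc (4 - del) v Rc hrT' ltac:(lra)) as [s [hs hlt]].
      { assert (Rmax A (Rmax B C) = C).
        { rewrite (Rmax_right B C) by lra. rewrite Rmax_right; lra. }
        fold C. lra. }
      exact (fin c zc s hs hlt (Kc zc s)).
    +
      destruct (Heq zb r hrT') as [_ [_ [eb _]]].
      pose proof (decay_pt phi b T _ _ zb r Rphi Rb hrT' hzb eb) as hdec.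
      assert (halg := alg (a zb r) (c zb r) (b zb r) (hpa zb) (hpc zb) (hpb zb)
                       ltac:(specialize (hA zb); fold B; lra) ltac:(specialize (hC zb); fold B; lra)).
      replace (a zb r ^ 2 * b zb r * c zb r ^ 2) with (a zb r ^ 2 * c zb r ^ 2 * b zb r) in hdec by ring.
      destruct (step3 b T r zb (4 - del) v Rb hrT' ltac:(lra)) as [s [hs hlt]].
      { assert (Rmax A (Rmax B C) = B).
        { rewrite (Rmax_left B C) by lra. rewrite Rmax_right; lra. }
        fold B. lra. }
      exact (fin b zb s hs hlt (Kb zb s)).
    +
      destruct (Heq zc r hrT') as [_ [_ [_ ec]]].
      pose proof (decay_pt phi c T _ _ zc r Rphi Rc hrT' hzc ec) as hdec.
      assert (halg := alg (a zc r) (b zc r) (c zc r) (hpa zc) (hpb zc) (hpc zc)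
                       ltac:(specialize (hA zc); fold C; lra) ltac:(specialize (hB zc); fold C; lra)).
      destruct (step3 c T r zc (4 - del) v Rc hrT' ltac:(lra)) as [s [hs hlt]].
      { assert (Rmax A (Rmax B C) = C).
        { rewrite (Rmax_right B C) by lra. rewrite Rmax_right; lra. }
        fold C. lra. }
      exact (fin c zc s hs hlt (Kc zc s)). }
  destruct (reg_max c T t Rc Ht) as [zt hzt].
  rewrite (lub_max (fun z => c z t) zt hzt). fold M.
  apply Rnot_lt_le. intro hgt.
  set (del := (c zt t ^ 2 - (-4 * t + M)) / (t + 1)).
  assert (hdel : 0 < del) by (unfold del; apply Rdiv_lt_0_compat; lra).
  specialize (Claim del hdel t zt Ht). specialize (Kc zt t).
  assert (del * t < c zt t ^ 2 - (-4 * t + M)).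
  { unfold del. apply (Rmult_lt_reg_r (t + 1)); [lra|].
    replace ((c zt t ^ 2 - (-4 * t + M)) / (t + 1) * t * (t + 1)) with
      ((c zt t ^ 2 - (-4 * t + M)) * t) by (field; lra). nra. }
  lra.
Qed.
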